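(* Let $X,Y$ be Banach spaces, let $F:X\rightrightarrows Y$ be a closed convex set-valued mapping, let $A\subset X$ be a closed convex set, let $\bar y\in Y$, put $S:=F^{-1}(\bar y)\cap A$, and let $\bar x\in S$. Then $$\frac{1}{\eta_A(F,\bar x,\bar y)}=\inf\{\tau>0:\exists\delta>0\text{ such that } N(S,x)\cap B_{X^*}\subset\tau\big(D^*F(x,\bar y)(B_{Y^*})+N(A,x)\cap B_{X^*}\big)\text{ for every }x\in S\cap B(\bar x,\delta)\}.$$
   Context: $B_X,B_Y,B_{X^*},B_{Y^*}$ are the closed unit balls of $X,Y$ and their duals; $B(x,\delta)$ is the open ball. $F$ closed convex means ${\rm gph}(F)=\{(x,y):y\in F(x)\}$ is closed and convex in $X\times Y$. For a closed convex set $C$ and $a\in C$: the contingent cone $T(C,a)$ is the set of $v$ for which there exist $v_n\to v$, $t_n\to0^+$ with $a+t_nv_n\in C$ for all $n$; the normal cone is $N(C,a):=\{x^*\in X^*:\langle x^*,x-a\rangle\le0\ \forall x\in C\}$. For $(x,y)\in{\rm gph}(F)$: $DF^{-1}(y,x)(v):=\{u\in X:(u,v)\in T({\rm gph}(F),(x,y))\}$, $DF^{-1}(y,x)(W)=\bigcup_{v\in W}DF^{-1}(y,x)(v)$ for $W\subset Y$; the coderivative is $D^*F(x,y)(y^* ):=\{x^*\in X^*:(x^*,-y^* )\in N({\rm gph}(F),(x,y))\}$ and $D^*F(x,y)(B_{Y^*})=\bigcup_{y^*\in B_{Y^*}}D^*F(x,y)(y^* )$. $\eta_A(F,\bar x,\bar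 y):=\sup\{\eta>0:\exists\delta>0$ such that for every $x\in S\cap B(\bar x,\delta)$: $DF^{-1}(\bar y,x)(\eta_1B_Y)\cap(T(A,x)+\eta_2B_X)\subset T(S,x)+B_X$ for all $\eta_1,\eta_2\ge0$ with $\eta_1+\eta_2<\eta\}$, with $\sup\emptyset=0$, $\inf\emptyset=+\infty$, $1/0=+\infty$. *)

(* Defs.v *)
From HB Require Import structures.
From mathcomp Require Import all_boot all_order all_algebra.
From mathcomp Require Import all_classical all_reals all_analysis.
Set Implicit Arguments. Unset Strict Implicit. Unset Printing Implicit Defensive.
Import Order.TTheory GRing.Theory Num.Theory.
Import numFieldNormedType.Exports.
Local Open Scope classical_set_scope.
Local Open Scope ring_scope.

Section VarAnal.
Variable R : realType.

Definition convexS (V : lmodType R) (C : set V) :=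
  forall x y (t : R), C x -> C y -> 0 <= t -> t <= 1 -> C (t *: x + (1 - t) *: y).

Definition cball1 (X : normedModType R) : set X := [set x | `|x| <= 1].

Definition oball (X : normedModType R) (a : X) (d : R) : set X :=
  [set x | `|x - a| < d].

Definition scaleS (X : lmodType R) (r : R) (C : set X) : set X :=
  [set r *: c | c in C].
Definition msum (X : lmodType R) (C D : set X) : set X :=
  [set c + d | c in C & d in D].

Definition is_dual (X : normedModType R) (f : X -> R) :=
  linear f /\ continuous f.

Definition dball1 (X : normedModType R) : set (X -> R) :=
  [set f | is_dual f /\ forall x, `|f x| <= `|x|].

Definition tcone (X : normedModType R) (C : set X) (a : X) : set X :=
  [set v | exists (vn : nat -> X) (tn : nat -> R),
     vn @ \oo --> v /\ tn @ \oo --> 0 /\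
     (forall n, 0 < tn n) /\ (forall n, C (a + tn n *: vn n))].

Definition ncone (X : normedModType R) (C : set X) (a : X) : set (X -> R) :=
  [set f | is_dual f /\ forall x, C x -> f (x - a) <= 0].

Definition gph (X Y : Type) (F : X -> set Y) : set (X * Y) :=
  [set p | F p.1 p.2].

Definition closed_convex_map (X Y : normedModType R) (F : X -> set Y) :=
  closed (gph F) /\
  (forall x1 y1 x2 y2 (t : R), F x1 y1 -> F x2 y2 -> 0 <= t -> t <= 1 ->
     F (t *: x1 + (1 - t) *: x2) (t *: y1 + (1 - t) *: y2)).

Definition DFinv (X Y : normedModType R) (F : X -> set Y) (y : Y) (x : X)
  (v : Y) : set X :=
  [set u | tcone (gph F : set (X * Y)%type) (x, y) (u, v)].

Definition DFinvS (X Y : normedModType R) (F : X -> set Y) (y : Y) (x : X)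
  (W : set Y) : set X :=
  [set u | exists2 v, W v & DFinv F y x v u].

(* coderivative: x^* in D^*F(x,y)(y^* ) iff (x^*, -y^* ) in N(gph F,(x,y)),
   with the dual of X x Y identified with pairs (x^* , z^* ), pairing x^* u + z^* v *)
Definition coderiv (X Y : normedModType R) (F : X -> set Y) (x : X) (y : Y)
  (ys : Y -> R) : set (X -> R) :=
  [set xs | is_dual xs /\ is_dual ys /\
     forall u v, F u v -> xs (u - x) + (- ys (v - y)) <= 0].

Definition coderivB (X Y : normedModType R) (F : X -> set Y) (x : X) (y : Y)
  : set (X -> R) :=
  [set xs | exists2 ys, dball1 ys & coderiv F x y ys xs].

Definition eta_set (X Y : normedModType R) (F : X -> set Y) (A : set X)
  (xb : X) (yb : Y) : set R :=
  let S := [set x | F x yb /\ A x] in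
  [set eta | 0 < eta /\ exists2 delta, 0 < delta &
     forall x, S x -> oball xb delta x ->
     forall eta1 eta2, 0 <= eta1 -> 0 <= eta2 -> eta1 + eta2 < eta ->
       (DFinvS F yb x (scaleS eta1 (@cball1 Y)) `&`
        msum (tcone A x) (scaleS eta2 (@cball1 X)))
       `<=` msum (tcone S x) (@cball1 X)].

(* eta_A(F,xbar,ybar) with the convention sup emptyset = 0
   (all elements are > 0, so adjoining 0 realizes exactly this convention) *)
Definition etaA (X Y : normedModType R) (F : X -> set Y) (A : set X)
  (xb : X) (yb : Y) : \bar R :=
  ereal_sup ((fun e : R => e%:E) @` eta_set F A xb yb `|` [set 0%E]).

Definition tau_set (X Y : normedModType R) (F : X -> set Y) (A : set X)
  (xb : X) (yb : Y) : set R :=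
  let S := [set x | F x yb /\ A x] in
  [set tau | 0 < tau /\ exists2 delta, 0 < delta &
     forall x, S x -> oball xb delta x ->
     forall xs, ncone S x xs -> dball1 xs ->
       exists us ws, coderivB F x yb us /\ ncone A x ws /\ dball1 ws /\
         xs = (fun z => tau * (us z + ws z))].

End VarAnal.

(* Main.v *)
Require Import Defs.
From HB Require Import structures.
From mathcomp Require Import all_boot all_order all_algebra.
From mathcomp Require Import all_classical all_reals all_analysis.
From mathcomp Require Import lra ring.
Import Order.TTheory GRing.Theory Num.Theory.
Import numFieldNormedType.Exports.
Local Open Scope classical_set_scope.
Local Open Scope ring_scope.

Section HahnBanach.
Variable R : realType.
Variable V : lmodType R.
Variable p : V -> R.
Hypothesis padd : forall x y, p (x + y) <= p x + p y.
Hypothesis phom : forall (t : R) x, 0 <= t -> p (t *: x) = t * p x.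

Let p0 : p 0 = 0.
Proof. by rewrite -(scale0r (0:V)) phom // mul0r. Qed.

Definition goodG (G : set (V * R)) :=
  [/\ (forall x a b, G (x, a) -> G (x, b) -> a = b),
      (forall x a y b, G (x, a) -> G (y, b) -> G (x + y, a + b)),
      (forall t x a, G (x, a) -> G (t *: x, t * a)) &
      (forall x a, G (x, a) -> a <= p x)].

Lemma goodG0 G : goodG G -> goodG (G `|` [set (0, 0)]).
Proof.
case=> Gf Ga Gs Gp.
have G0 : forall a, G (0, a) -> a = 0.
  move=> a Ga0; have := Gs 0 0 a Ga0; rewrite scale0r mul0r => G00.
  exact: Gf Ga0 G00.
split.
- move=> x a b [Hxa|Ea] [Hxb|Eb].
  + exact: (Gf x a b Hxa Hxb).
  + by case: Eb => ??; subst; rewrite (G0 _ Hxa).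
  + by case: Ea => ??; subst; rewrite (G0 _ Hxb).
  + by case: Ea => ??; case: Eb => ??; subst.
- move=> x a y b [Hxa|Ea] [Hyb|Eb].
  + by left; exact: Ga.
  + by case: Eb => ??; subst; rewrite !addr0; left.
  + by case: Ea => ??; subst; rewrite !add0r; left.
  + by case: Ea => ??; case: Eb => ??; subst; right; rewrite !addr0.
- move=> t x a [Hxa|Ea]; first by left; exact: Gs.
  by case: Ea => ??; subst; right; rewrite scaler0 mulr0.
- move=> x a [Hxa|Ea]; first exact: Gp.
  by case: Ea => ??; subst; rewrite p0.
Qed.

Lemma goodG_ext G x0 : goodG G -> G (0,0) -> (forall a, ~ G (x0, a)) ->
  exists B, [/\ goodG B, G `<=` B & B (x0, sup [set z.2 - p (z.1 - x0) | z in G])].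
Proof.
move=> [Gf Ga Gs Gp] G00 nx0.
set E := [set _ - _ | _ in _].
set c := sup E.
have ubE : forall m1 a1, G (m1, a1) -> ubound E (p (m1 + x0) - a1).
  move=> m1 a1 H1 _ [[m2 a2] H2 <-] /=.
  have h1 := Gp _ _ (Ga _ _ _ _ H1 H2).
  have h2 := padd (m2 - x0) (m1 + x0).
  have e : m2 - x0 + (m1 + x0) = m1 + m2 by rewrite addrCA subrK addrC.
  rewrite e in h2.
  by rewrite lerBlDr addrAC lerBrDr addrC; apply: le_trans h2; rewrite addrC.
have hsE : has_sup E.
  split; first by exists (0 - p (0 - x0)), (0,0).
  by exists (p (0 + x0) - 0); exact: ubE.
have cub : forall m1 a1, G (m1, a1) -> c <= p (m1 + x0) - a1.
  by move=> m1 a1 H1; apply: ge_sup; [case: hsE|exact: ubE].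
have clb : forall m1 a1, G (m1, a1) -> a1 - p (m1 - x0) <= c.
  by move=> m1 a1 H1; apply: sup_upper_bound => //; exists (m1, a1).
pose B := [set z | exists m a (t : R), G (m, a) /\ z = (m + t *: x0, a + t * c)].
exists B; split.
- split.
  + move=> x a b [m [a1 [t [H1 [-> ->]]]]] [m' [a' [t' [H2 []]]]].
    have [<-|tt'] := eqVneq t t'.
      by move=> /addIr Em ->; subst m'; rewrite (Gf _ _ _ H1 H2).
    move=> E1 _; exfalso.
    have : x0 = (t - t')^-1 *: (m' + (-1) *: m).
      apply: (@scalerI _ _ (t - t')); first by rewrite subr_eq0.
      rewrite scalerA divff ?subr_eq0 // scale1r scaleN1r.
      apply/eqP; rewrite scalerBl subr_eq addrAC -E1.
      by rewrite addrAC subrr add0r.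
    move=> x0E; apply: (nx0 ((t - t')^-1 * (a' + (-1) * a1))).
    by rewrite x0E; apply: (Gs); apply: (Ga) => //; exact: (Gs).
  + move=> x a y b [m [a1 [t [H1 [-> ->]]]]] [m' [a' [t' [H2 [-> ->]]]]].
    exists (m + m'), (a1 + a'), (t + t'); split; first exact: Ga.
    by congr pair; rewrite ?scalerDl ?mulrDl addrACA.
  + move=> s x a [m [a1 [t [H1 [-> ->]]]]].
    exists (s *: m), (s * a1), (s * t); split; first exact: Gs.
    by rewrite scalerDr mulrDr scalerA mulrA.
  + move=> x a [m [a1 [t [H1 [-> ->]]]]].
    have [t0|t0|->] := ltgtP t 0; last by rewrite scale0r mul0r !addr0; exact: Gp.
    * have s0 : 0 < - t by rewrite oppr_gt0.
      have H1' := Gs ((- t)^-1) _ _ H1.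
      have := clb _ _ H1'; rewrite lerBlDr -lerBlDl => hc.
      have := ler_wpM2l (ltW s0) hc.
      have e1 : (-t) * ((-t)^-1 * a1 - c) = a1 + t * c.
        by rewrite mulrBr mulrA divff ?gt_eqF // mul1r mulNr opprK.
      have e2 : (-t) * p ((-t)^-1 *: m - x0) = p (m + t *: x0).
        rewrite -phom ?ltW // scalerBr scalerA divff ?gt_eqF // scale1r.
        by rewrite scaleNr opprK.
      by rewrite e1 e2.
    * have H1' := Gs (t^-1) _ _ H1.
      have hc := cub _ _ H1'.
      have := ler_wpM2l (ltW t0) hc.
      have e1 : t * (p (t^-1 *: m + x0) - t^-1 * a1) = p (m + t *: x0) - a1.
        rewrite mulrBr mulrA divff ?gt_eqF // mul1r -phom ?ltW //.
        by rewrite scalerDr scalerA divff ?gt_eqF // scale1r.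
      by rewrite e1 => h; rewrite addrC -lerBrDr.
- by move=> [m a] Hma; exists m, a, 0; rewrite scale0r mul0r !addr0.
- by exists 0, 0, 1; rewrite scale1r mul1r !add0r.
Qed.

Lemma hahn_banach0 : exists L : V -> R, linear L /\ forall x, L x <= p x.
Proof.
have [A [gA Amax]] : exists A, goodG A /\ forall B, A `<` B -> ~ goodG B.
  apply: Zorn_bigcup => F FP Ftot; split.
  - move=> x a b [X FX Xa] [Y FY Yb].
    have [XY|YX] := Ftot _ _ FX FY.
      by case: (FP _ FY) => Yf _ _ _; apply: Yf (XY _ Xa) Yb.
    by case: (FP _ FX) => Xf _ _ _; apply: Xf Xa (YX _ Yb).
  - move=> x a y b [X FX Xa] [Y FY Yb].
    have [XY|YX] := Ftot _ _ FX FY.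
      by exists Y => //; case: (FP _ FY) => _ Ya _ _; apply: Ya (XY _ Xa) Yb.
    by exists X => //; case: (FP _ FX) => _ Xa' _ _; apply: Xa' Xa (YX _ Yb).
  - move=> t x a [X FX Xa]; exists X => //.
    by case: (FP _ FX) => _ _ Xs _; exact: Xs.
  - by move=> x a [X FX Xa]; case: (FP _ FX) => _ _ _ Xp; exact: Xp.
pose A' := A `|` [set (0, 0)].
have gA' := goodG0 _ gA.
have tot : forall x, exists a, A' (x, a).
  move=> x0; apply: contrapT => nx.
  have nx' : forall a, ~ A' (x0, a) by move=> a H; apply: nx; exists a.
  have [B [gB A'B Bx0]] := goodG_ext _ _ gA' (or_intror erefl) nx'.
  apply: (Amax B) => //; split.
    by move=> z Az; apply: A'B; left.
  by move=> BA; apply: (nx' _); left; apply: BA; exact: Bx0.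
pose L x := projT1 (cid (tot x)).
have LP : forall x, A' (x, L x) by move=> x; exact: projT2 (cid (tot x)).
case: gA' => Af Aa As Ap.
exists L; split; last by move=> x; exact: (Ap _ _ (LP x)).
move=> t u v /=.
apply: (Af (t *: u + v)); first exact: LP.
by apply: (Aa); [apply: (As)|]; exact: LP.
Qed.

End HahnBanach.

Section LinFacts.
Variable R : realType.
Variable V : lmodType R.
Variable L : V -> R.
Hypothesis Llin : linear L.
Lemma lin_add u v : L (u + v) = L u + L v.
Proof. by have := Llin 1 u v; rewrite !scale1r. Qed.
Lemma lin0 : L 0 = 0.
Proof. by have := lin_add 0 0; rewrite addr0; lra. Qed.
Lemma lin_scale a u : L (a *: u) = a * L u.
Proof. by have := Llin a u 0; rewrite !addr0 lin0 addr0. Qed.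
Lemma linN u : L (- u) = - L u.
Proof. by rewrite -scaleN1r lin_scale mulN1r. Qed.
Lemma linB u v : L (u - v) = L u - L v.
Proof. by rewrite lin_add linN. Qed.
End LinFacts.

Section HBCone.
Variable R : realType.
Variables V W : lmodType R.
Variable N : V -> R.
Hypothesis Nadd : forall x y, N (x + y) <= N x + N y.
Hypothesis Nhom : forall (t : R) x, 0 <= t -> N (t *: x) = t * N x.
Variable C : set W.
Hypothesis C0 : C 0.
Hypothesis Cadd : forall w1 w2, C w1 -> C w2 -> C (w1 + w2).
Hypothesis Cscale : forall (t : R) w, 0 < t -> C w -> C (t *: w).
Variable g : W -> V.
Hypothesis gadd : forall w1 w2, g (w1 + w2) = g w1 + g w2.
Hypothesis gscale : forall (t : R) w, g (t *: w) = t *: g w.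
Variable psi : W -> R.
Hypothesis psiadd : forall w1 w2, psi (w1 + w2) = psi w1 + psi w2.
Hypothesis psiscale : forall (t : R) w, psi (t *: w) = t * psi w.
Hypothesis psiN : forall w, C w -> psi w <= N (g w).

Let N0 : N 0 = 0.
Proof. by rewrite -(scale0r (0:V)) Nhom // mul0r. Qed.
Let psi0 : psi 0 = 0.
Proof. by rewrite -(scale0r (0:W)) psiscale mul0r. Qed.
Let g0 : g 0 = 0.
Proof. by rewrite -(scale0r (0:W)) gscale scale0r. Qed.

Let E x := [set N (x + g w) - psi w | w in C].
Let q x := inf (E x).

Let Elb x : lbound (E x) (- N (- x)).
Proof.
move=> _ [w Cw <-].
have h := Nadd (x + g w) (- x).
rewrite addrC addKr in h.
have := psiN _ Cw; lra.
Qed.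

Let Ene x : E x !=set0.
Proof. by exists (N (x + g 0) - psi 0), 0. Qed.

Let Ehas x : has_lbound (E x).
Proof. by exists (- N (- x)); exact: Elb. Qed.

Let qle x w : C w -> q x <= N (x + g w) - psi w.
Proof. by move=> Cw; apply: ge_inf => //; exists w. Qed.

Let qlb x : - N (- x) <= q x.
Proof. exact: lb_le_inf (Ene x) (Elb x). Qed.

Let qge x a : (forall w, C w -> a <= N (x + g w) - psi w) -> a <= q x.
Proof. by move=> H; apply: lb_le_inf => // _ [w Cw <-]; exact: H. Qed.

Let qadd x y : q (x + y) <= q x + q y.
Proof.
have H1 : forall w2, C w2 -> q (x + y) - (N (y + g w2) - psi w2) <= q x.
  move=> w2 C2; apply: qge => w1 C1.
  have h1 := qle (x + y) _ (Cadd _ _ C1 C2).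
  have h2 := Nadd (x + g w1) (y + g w2).
  have e : x + g w1 + (y + g w2) = x + y + g (w1 + w2).
    by rewrite gadd addrACA.
  rewrite e psiadd in h2 h1; lra.
have : q (x + y) - q x <= q y.
  by apply: qge => w2 C2; have := H1 _ C2; lra.
lra.
Qed.

Let qsc t x : 0 < t -> q (t *: x) <= t * q x.
Proof.
move=> t0.
rewrite -ler_pdivrMl //; apply: qge => w Cw.
rewrite ler_pdivrMl //.
have := qle (t *: x) _ (Cscale _ _ t0 Cw).
rewrite gscale -scalerDr (Nhom _ _ (ltW t0)) psiscale.
by rewrite -mulrBr.
Qed.

Let q0 : q 0 = 0.
Proof.
apply/eqP; rewrite eq_le; apply/andP; split.
  by have := qle 0 _ C0; rewrite g0 psi0 addr0 subr0 N0.
by have := qlb 0; rewrite oppr0 N0 oppr0.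
Qed.

Let qhom t x : 0 <= t -> q (t *: x) = t * q x.
Proof.
rewrite le_eqVlt => /orP[/eqP <-|t0]; first by rewrite scale0r mul0r q0.
apply/eqP; rewrite eq_le qsc //=.
have ti : 0 < t^-1 by rewrite invr_gt0.
have := qsc _ (t *: x) ti; rewrite scalerA mulVf ?gt_eqF // scale1r.
by rewrite ler_pdivlMl // mulrC.
Qed.

Lemma hahn_banach_cone : exists L : V -> R, linear L /\
  (forall x, L x <= N x) /\ (forall w, C w -> psi w <= L (g w)).
Proof.
have [L [Llin LP]] := hahn_banach0 _ _ _ qadd qhom.
exists L; split => //; split.
  move=> x; apply: (le_trans (LP x)).
  by have := qle x _ C0; rewrite g0 psi0 addr0 subr0.
move=> w Cw.
have := le_trans (LP (- g w)) (qle (- g w) _ Cw).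
rewrite addNr N0 sub0r.
rewrite (linN _ _ _ Llin); lra.
Qed.
End HBCone.

Set Implicit Arguments. Unset Strict Implicit.

Section Generic.
Variable R : realType.

Lemma seq_le0 (f : nat -> R) l : f @ \oo --> l -> (forall n, f n <= 0) -> l <= 0.
Proof.
move=> fl fle.
have := @closed_cvg nat R \oo _ f [set x : R | x <= 0] (@closed_le R 0).
by apply => //; apply: nearW.
Qed.

Lemma bounded_cont (X : normedModType R) (f : X -> R) (k : R) :
  0 <= k -> linear f -> (forall z, `|f z| <= k * `|z|) -> continuous f.
Proof.
move=> hk lf fb x; apply/cvgrPdist_lt => e e0.
have k1 : 0 < k + 1 by lra.
have e1 : 0 < e / (k + 1) by rewrite divr_gt0.
have h : \forall t \near x, `|x - t| < e / (k + 1).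
  by move: (@cvg_id _ (nbhs x)) => /cvgrPdist_lt /(_ _ e1).
near=> t; have ht : `|x - t| < e / (k + 1) by near: t.
rewrite -(linB _ _ _ lf); apply: (le_lt_trans (fb _)).
apply: (@le_lt_trans _ _ ((k + 1) * `|x - t|)).
  by apply: ler_wpM2r => //; lra.
by rewrite -ltr_pdivlMl // mulrC.
Unshelve. all: by end_near.
Qed.

Lemma dual_cont (X : normedModType R) (f : X -> R) :
  linear f -> (forall z, `|f z| <= `|z|) -> is_dual f.
Proof. by move=> lf fb; split => //; apply: (@bounded_cont _ _ 1) => // z; rewrite mul1r. Qed.

Lemma tcone_le0 (X : normedModType R) (D : set X) (a : X) (f : X -> R) :
  is_dual f -> (forall s, D s -> f (s - a) <= 0) -> forall v, tcone D a v -> f v <= 0.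
Proof.
move=> [lf cf] fD v [vn [tn [vnv [tn0 [tpos Dn]]]]].
apply: (@seq_le0 (f \o vn)).
  by apply: continuous_cvg; [exact: cf | exact: vnv].
move=> n /=; have := fD _ (Dn n); rewrite addrC addKr (lin_scale _ _ _ lf).
by rewrite pmulr_rle0.
Qed.

Definition coneD (V : lmodType R) (D : set V) (a : V) : set V :=
  [set c | exists t s, 0 <= t /\ D s /\ c = t *: (s - a)].
Arguments coneD {V}.

Lemma coneD0 (V : lmodType R) (D : set V) a : D a -> coneD D a 0.
Proof. by move=> Da; exists 0, a; rewrite scale0r. Qed.

Lemma coneD1 (V : lmodType R) (D : set V) a s : D s -> coneD D a (s - a).
Proof. by move=> Ds; exists 1, s; rewrite scale1r. Qed.

Lemma coneD_scale (V : lmodType R) (D : set V) a (l : R) c :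
  0 <= l -> coneD D a c -> coneD D a (l *: c).
Proof.
move=> l0 [t [s [t0 [Ds ->]]]]; exists (l * t), s; split; first exact: mulr_ge0.
by rewrite scalerA.
Qed.

Lemma coneD_add (V : lmodType R) (D : set V) a c1 c2 :
  convexS D -> D a -> coneD D a c1 -> coneD D a c2 -> coneD D a (c1 + c2).
Proof.
move=> cD Da [t1 [s1 [t10 [D1 ->]]]] [t2 [s2 [t20 [D2 ->]]]].
have [t12|t12] := eqVneq (t1 + t2) 0.
  have e1 : t1 = 0 by lra.
  have e2 : t2 = 0 by lra.
  by rewrite e1 e2 !scale0r addr0; exact: coneD0.
have tp : 0 < t1 + t2 by rewrite lt_neqAle eq_sym t12 addr_ge0.
exists (t1 + t2), ((t1 / (t1 + t2)) *: s1 + (1 - t1 / (t1 + t2)) *: s2).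
split; first exact: ltW.
split.
  apply: cD => //; first by rewrite divr_ge0 // ltW.
  by rewrite ler_pdivrMr // mul1r lerDl.
have e : 1 - t1 / (t1 + t2) = t2 / (t1 + t2).
  by apply/eqP; rewrite subr_eq -mulrDl (addrC t2) divff // lt0r_neq0.
have E1 : (t1 + t2) *: ((t1 / (t1 + t2)) *: s1) = t1 *: s1.
  by rewrite scalerA mulrC divfK ?lt0r_neq0.
have E2 : (t1 + t2) *: ((t2 / (t1 + t2)) *: s2) = t2 *: s2.
  by rewrite scalerA mulrC divfK ?lt0r_neq0.
rewrite e [in RHS]scalerBr [in RHS]scalerDr E1 E2.
by rewrite !scalerBr scalerDl opprD addrACA.
Qed.

Lemma coneD_tcone (V : normedModType R) (D : set V) a c :
  convexS D -> D a -> coneD D a c -> tcone D a c.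
Proof.
move=> cD Da [t [s [t0 [Ds ->]]]].
exists (fun=> t *: (s - a)), (fun n => (t + 1)^-1 * harmonic n).
have t1 : 0 < t + 1 by lra.
split; first exact: cvg_cst.
split.
  have := @cvgMl_tmp R nat _ _ harmonic ((t + 1)^-1) 0 cvg_harmonic.
  by rewrite mulr0; apply.
split; first by move=> n; rewrite mulr_gt0 ?invr_gt0 ?harmonic_gt0.
move=> n.
set l := (t + 1)^-1 * harmonic n * t.
have l0 : 0 <= l by rewrite /l !mulr_ge0 ?invr_ge0 ?harmonic_ge0 // ltW.
have l1 : l <= 1.
  rewrite /l -mulrAC -mulrA.
  have h1 : harmonic n <= 1 :> R.
    by rewrite /harmonic /= invf_le1 ?ler1n // ltr0n.
  have h2 : t / (t + 1) <= 1 by rewrite ler_pdivrMr // mul1r; lra.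
  have h3 : 0 <= t / (t + 1) by rewrite divr_ge0 // ltW.
  have := ler_wpM2l (harmonic_ge0 n) h2.
  rewrite mulr1 => h4; apply: le_trans h1; apply: le_trans h4.
  have -> : (t + 1)^-1 * (t * harmonic n) = harmonic n * (t / (t + 1)) :> R by ring.
  by [].
have := cD s a l Ds Da l0 l1.
congr D.
rewrite scalerA -/l scalerBr scalerBl scale1r.
by rewrite addrCA addrC.
Qed.

End Generic.

Lemma scaleS_norm (R : realType) (Z : normedModType R) (z : Z) (l : R) :
  scaleS (l * `|z|) (@cball1 _ Z) (l *: z).
Proof.
have [->|z0] := eqVneq z 0.
  by exists 0; rewrite /cball1 /= ?normr0 ?ler01 // !scaler0.
exists (`|z|^-1 *: z).
  rewrite /cball1 /= normrZ normfV normr_id mulVf //.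
  by rewrite normr_eq0.
by rewrite scalerA -mulrA mulfV ?normr_eq0 // mulr1.
Qed.

Section Main.
Variable R : realType.
Variables X Y : normedModType R.
Variable F : X -> set Y.
Variable A : set X.
Variable yb : Y.
Hypothesis cF : closed_convex_map F.
Hypothesis cA : convexS A.
Let S := [set x | F x yb /\ A x].

Lemma convex_gph : convexS (gph F : set (X * Y)%type).
Proof.
case: cF => _ cv [x1 y1] [x2 y2] t /= h1 h2 t0 t1.
exact: (cv x1 y1 x2 y2 t h1 h2 t0 t1).
Qed.

Lemma convex_S : convexS S.
Proof.
case: cF => _ cv x1 x2 t [F1 A1] [F2 A2] t0 t1; split.
  have := cv x1 yb x2 yb t F1 F2 t0 t1.
  have -> : t *: yb + (1 - t) *: yb = yb by rewrite -scalerDl addrCA subrr addr0 scale1r.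
  by [].
exact: cA.
Qed.

Lemma dual_lin (Z : normedModType R) (f : Z -> R) : is_dual f -> linear f.
Proof. by case. Qed.

Lemma graph_le0 x us ys : is_dual us -> is_dual ys ->
  (forall u' v', F u' v' -> us (u' - x) + - ys (v' - yb) <= 0) ->
  forall u v, tcone (gph F : set (X * Y)%type) (x, yb) (u, v) -> us u - ys v <= 0.
Proof.
move=> dus dys H u v Tuv.
have [lus cus] := dus; have [lys cys] := dys.
pose h := fun p : (X * Y)%type => us p.1 - ys p.2.
have dh : is_dual h.
  split.
    move=> a p q; rewrite /h /= (lin_add _ _ _ lus) (lin_add _ _ _ lys).
    rewrite (lin_scale _ _ _ lus) (lin_scale _ _ _ lys).
    rewrite /GRing.scale /=; ring.
  move=> p; apply: cvgB.
    exact: (cvg_comp _ _ (@cvg_fst _ _ (nbhs p.1) (nbhs p.2) _) (cus p.1)).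
  exact: (cvg_comp _ _ (@cvg_snd _ _ (nbhs p.1) (nbhs p.2) _) (cys p.2)).
apply: (tcone_le0 dh _ Tuv).
move=> [u' v'] /= Fuv; rewrite /h /=.
by have := H u' v' Fuv.
Qed.

Lemma L1_point x tau : S x -> 0 < tau ->
  (forall xs, ncone S x xs -> dball1 xs ->
    exists us ws, coderivB F x yb us /\ ncone A x ws /\ dball1 ws /\
      xs = (fun z => tau * (us z + ws z))) ->
  forall e1 e2, 0 <= e1 -> 0 <= e2 -> e1 + e2 < tau^-1 ->
  (DFinvS F yb x (scaleS e1 (@cball1 _ Y)) `&`
        Defs.msum (tcone A x) (scaleS e2 (@cball1 _ X)))
       `<=` Defs.msum (tcone S x) (@cball1 _ X).
Proof.
move=> Sx t0 Htau e1 e2 e10 e20 e12 u [Du Dm].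
apply: contrapT => nu.
pose C := [set w : (X * R)%type | coneD S x w.1 /\ 0 <= w.2].
have Nhom : forall (t : R) (z : X), 0 <= t -> `|t *: z| = t * `|z|.
  by move=> t z tz; rewrite normrZ ger0_norm.
have C0 : C 0 by split; [exact: coneD0|].
have Cadd : forall w1 w2, C w1 -> C w2 -> C (w1 + w2).
  move=> w1 w2 [h1 h1'] [h2 h2']; split; first exact: coneD_add convex_S Sx h1 h2.
  exact: addr_ge0.
have Csc : forall (t : R) w, 0 < t -> C w -> C (t *: w).
  move=> t w tp [h1 h2]; split; first exact: coneD_scale (ltW tp) h1.
  exact: mulr_ge0 (ltW tp) h2.
have gadd : forall w1 w2 : (X * R)%type, (w1 + w2).2 *: u - (w1 + w2).1 =
   (w1.2 *: u - w1.1) + (w2.2 *: u - w2.1).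
  by move=> [a b] [c d] /=; rewrite scalerDl opprD addrACA.
have gsc : forall (t : R) (w : (X * R)%type), (t *: w).2 *: u - (t *: w).1 =
   t *: (w.2 *: u - w.1).
  by move=> t [a b] /=; rewrite scalerBr scalerA.
have psiN : forall w, C w -> w.2 <= `|w.2 *: u - w.1|.
  move=> [c t] [Kc tp] /=.
  rewrite leNgt; apply/negP => h.
  have tp' : 0 < t by apply: le_lt_trans h.
  apply: nu; exists (t^-1 *: c).
    apply: coneD_tcone convex_S Sx _.
    by apply: coneD_scale => //; rewrite invr_ge0.
  exists (u - t^-1 *: c); last by rewrite addrC subrK.
  rewrite /cball1 /=.
  have -> : u - t^-1 *: c = t^-1 *: (t *: u - c).
    by rewrite scalerBr scalerA mulVf ?gt_eqF // scale1r.
  rewrite normrZ ger0_norm ?invr_ge0 ?ltW //.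
  by rewrite ltr_pdivrMl // mulr1.
have [L [Llin [LN LC]]] := @hahn_banach_cone R X (X * R)%type (fun z : X => `|z|)
  (@ler_normD _ _) Nhom C C0 Cadd Csc
  (fun w => w.2 *: u - w.1) gadd gsc (fun w => w.2) (fun _ _ => erefl) (fun _ _ => erefl) psiN.
have LN' : forall z, `|L z| <= `|z|.
  move=> z; rewrite ler_norml LN andbT.
  by have := LN (- z); rewrite (linN _ _ _ Llin) normrN; lra.
have dL : dball1 L by split => //; exact: dual_cont.
have nL : ncone S x L.
  split; first by case: dL.
  move=> s Ss; have := LC (s - x, 0) (conj (coneD1 x Ss) (lexx 0)).
  by rewrite /= scale0r sub0r (linN _ _ _ Llin); lra.
have Lu : 1 <= L u.
  have := LC (0, 1) (conj (coneD0 Sx) ler01).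
  by rewrite /= scale1r subr0.
have [us [ws [[ys dys cds] [nws [dws LE]]]]] := Htau L nL dL.
have Lu' : L u = tau * (us u + ws u) by rewrite LE.
case: Du => v [b bB <-] Tuv.
case: cds => dus [dys' Hcd].
have h1 := graph_le0 dus dys' Hcd Tuv.
have h2 : ys (e1 *: b) <= e1.
  rewrite (lin_scale _ _ _ (dual_lin dys')).
  have := ler_wpM2l e10 (le_trans (ler_norm _) (le_trans (dys.2 b) bB)).
  by rewrite mulr1.
case: Dm => a Ta [d [b' bB' <-] ade].
have h3 : ws a <= 0.
  by apply: (tcone_le0 nws.1 _ Ta); case: nws.
have h4 : ws (e2 *: b') <= e2.
  rewrite (lin_scale _ _ _ (dual_lin dws.1)).
  have := ler_wpM2l e20 (le_trans (ler_norm _) (le_trans (dws.2 b') bB')).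
  by rewrite mulr1.
have h5 : ws u = ws a + ws (e2 *: b') by rewrite -ade (lin_add _ _ _ (dual_lin dws.1)).
have h6 : us u + ws u <= e1 + e2 by lra.
have h7 : tau * (us u + ws u) <= tau * (e1 + e2) by apply: ler_wpM2l => //; exact: ltW.
have h8 : tau * (e1 + e2) < 1.
  by rewrite -(mulfV (lt0r_neq0 t0)) ltr_pM2l.
lra.
Qed.

Lemma L2_point x eta tau : S x -> 0 < tau -> 1 < tau * eta ->
  (forall e1 e2, 0 <= e1 -> 0 <= e2 -> e1 + e2 < eta ->
  (DFinvS F yb x (scaleS e1 (@cball1 _ Y)) `&`
        Defs.msum (tcone A x) (scaleS e2 (@cball1 _ X)))
       `<=` Defs.msum (tcone S x) (@cball1 _ X)) ->
  forall xs, ncone S x xs -> dball1 xs ->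
    exists us ws, coderivB F x yb us /\ ncone A x ws /\ dball1 ws /\
      xs = (fun z => tau * (us z + ws z)).
Proof.
move=> Sx t0 te Heta xs nxs dxs.
have Fx : (gph F : set (X * Y)%type) (x, yb) by case: Sx.
have Ax : A x by case: Sx.
have lxs := dual_lin dxs.1.
have key : forall u v a, coneD (gph F : set (X * Y)%type) (x, yb) (u, v) -> coneD A x a ->
    forall l, 0 < l -> l * (`|v| + `|u - a|) < eta -> l * xs u <= 1.
  move=> u v a KG KA l l0 hl.
  have hm : Defs.msum (tcone S x) (@cball1 _ X) (l *: u).
    apply: (Heta (l * `|v|) (l * `|u - a|)).
    - by rewrite mulr_ge0 // ltW.
    - by rewrite mulr_ge0 // ltW.
    - by rewrite -mulrDr.
    split.
      exists (l *: v); first exact: scaleS_norm.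
      exact: (coneD_tcone convex_gph Fx (coneD_scale (ltW l0) KG)).
    exists (l *: a); first exact: (coneD_tcone cA Ax (coneD_scale (ltW l0) KA)).
    exists (l *: (u - a)); first exact: scaleS_norm.
    by rewrite -scalerDr addrC subrK.
  case: hm => c Tc [b bB cb].
  rewrite -(lin_scale _ _ _ lxs) -cb (lin_add _ _ _ lxs).
  have h1 : xs c <= 0 by apply: (tcone_le0 nxs.1 _ Tc); case: nxs.
  have h2 : xs b <= 1 by apply: le_trans (ler_norm _) (le_trans (dxs.2 b) bB).
  lra.
have eta0 : 0 < eta.
  rewrite ltNge; apply/negP => h.
  have : tau * eta <= 0 by rewrite pmulr_rle0.
  lra.
have tinv : tau^-1 < eta by rewrite -[tau^-1]mul1r ltr_pdivrMr // mulrC.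
pose KG := coneD (gph F : set (X * Y)%type) (x, yb).
pose KA := coneD A x.
pose C := [set w : ((X * Y) * X)%type | KG w.1 /\ KA w.2].
pose N := fun p : (X * Y)%type => `|p.1| + `|p.2|.
pose g := fun w : ((X * Y) * X)%type => (w.1.1 - w.2, w.1.2) : (X * Y)%type.
pose psi := fun w : ((X * Y) * X)%type => xs w.1.1 / tau.
have Nadd : forall p q, N (p + q) <= N p + N q.
  move=> [a b] [c d]; rewrite /N /=.
  have := ler_normD a c; have := ler_normD b d; lra.
have Nhom : forall (t : R) p, 0 <= t -> N (t *: p) = t * N p.
  by move=> t [a b] tp; rewrite /N /= !normrZ ger0_norm // mulrDr.
have C0 : C 0 by split; [exact: coneD0|exact: coneD0].
have Cadd : forall w1 w2, C w1 -> C w2 -> C (w1 + w2).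
  move=> w1 w2 [h1 h1'] [h2 h2']; split.
    exact: coneD_add convex_gph Fx h1 h2.
  exact: coneD_add cA Ax h1' h2'.
have Csc : forall (t : R) w, 0 < t -> C w -> C (t *: w).
  move=> t w tp [h1 h2]; split; first exact: coneD_scale (ltW tp) h1.
  exact: coneD_scale (ltW tp) h2.
have gadd : forall w1 w2, g (w1 + w2) = g w1 + g w2.
  by move=> [[a b] c] [[a' b'] c']; rewrite /g /=; congr pair; rewrite opprD addrACA.
have gsc : forall (t : R) w, g (t *: w) = t *: g w.
  by move=> t [[a b] c]; rewrite /g /=; congr pair; rewrite scalerBr.
have psiadd : forall w1 w2, psi (w1 + w2) = psi w1 + psi w2.
  by move=> [[a b] c] [[a' b'] c']; rewrite /psi /= (lin_add _ _ _ lxs) mulrDl.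
have psisc : forall (t : R) w, psi (t *: w) = t * psi w.
  by move=> t [[a b] c]; rewrite /psi /= (lin_scale _ _ _ lxs) mulrA.
have psiN : forall w, C w -> psi w <= N (g w).
  move=> [[u v] a] [KGw KAw]; rewrite /psi /N /g /=.
  set s := `|v| + `|u - a|.
  have s0 : 0 <= s by rewrite addr_ge0.
  rewrite (addrC `|u - a|) -/s ler_pdivrMr //.
  have [sp|s00] := ltP 0 s.
    have l0 : 0 < (tau * s)^-1 by rewrite invr_gt0 mulr_gt0.
    have := key u v a KGw KAw _ l0.
    rewrite invfM -mulrA mulVf ?gt_eqF // mulr1 => /(_ tinv).
    by rewrite -invfM ler_pdivrMl ?mulr_gt0 // mulr1 mulrC.
  have s00' : s = 0 by apply/eqP; rewrite eq_le s00 s0.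
  rewrite s00' mul0r leNgt; apply/negP => hx.
  have l0 : 0 < 2 / xs u by rewrite divr_gt0.
  have := key u v a KGw KAw _ l0; rewrite -/s s00' mulr0 => /(_ eta0).
  rewrite mulrAC -mulrA mulfV ?gt_eqF // mulr1; lra.
have [L [Llin [LN LC]]] := @hahn_banach_cone R (X * Y)%type ((X * Y) * X)%type N
  Nadd Nhom C C0 Cadd Csc g gadd gsc psi psiadd psisc psiN.
have Lb : forall p, `|L p| <= N p.
  move=> p; rewrite ler_norml LN andbT.
  have := LN (- p); rewrite (linN _ _ _ Llin).
  have -> : N (- p) = N p by case: p => a b; rewrite /N /= !normrN.
  lra.
pose ws := fun z : X => L (z, 0).
pose ys := fun v : Y => L (0, v).
have lws : linear ws.
  move=> a z z'; rewrite /ws.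
  have -> : (a *: z + z', 0) = a *: (z, 0) + (z', 0) :> (X * Y)%type.
    by transitivity (a *: z + z', a *: (0:Y) + 0); first by rewrite scaler0 addr0.
  exact: Llin.
have lys : linear ys.
  move=> a z z'; rewrite /ys.
  have -> : (0, a *: z + z') = a *: (0, z) + (0, z') :> (X * Y)%type.
    by transitivity (a *: (0:X) + 0, a *: z + z'); first by rewrite scaler0 addr0.
  exact: Llin.
have bws : forall z, `|ws z| <= `|z|.
  by move=> z; have := Lb (z, 0); rewrite /N /= normr0 addr0.
have bys : forall z, `|ys z| <= `|z|.
  by move=> z; have := Lb (0, z); rewrite /N /= normr0 add0r.
have dws : dball1 ws by split => //; exact: dual_cont.
have dys : dball1 ys by split => //; exact: dual_cont.
have Lsplit : forall z v, L (z, v) = ws z + ys v.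
  move=> z v; rewrite /ws /ys -(lin_add _ _ _ Llin).
  by congr L; transitivity (z + 0, 0 + v); [rewrite addr0 add0r|].
exists (fun z => xs z / tau - ws z), ws.
split; last split; last split => //; last first.
  by apply: funext => z; rewrite subrK mulrC divfK ?gt_eqF.
- split; first by case: dws.
  move=> a' Aa'.
  have := LC ((0, 0), a' - x) (conj (coneD0 Fx) (coneD1 x Aa')).
  rewrite /psi /g /= (lin0 _ _ _ lxs) mul0r sub0r Lsplit (linN _ _ _ lws).
  rewrite /ys (lin0 _ _ _ Llin); lra.
- exists ys => //.
  split.
    split.
      move=> a z z' /=; rewrite (lin_add _ _ _ lxs) (lin_scale _ _ _ lxs).
      rewrite (lin_add _ _ _ lws) (lin_scale _ _ _ lws).
      rewrite /GRing.scale /=; field; exact: lt0r_neq0.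
    apply: (@bounded_cont _ _ _ (tau^-1 + 1)).
    + by rewrite addr_ge0 // invr_ge0 ltW.
    + move=> a z z' /=; rewrite (lin_add _ _ _ lxs) (lin_scale _ _ _ lxs).
      rewrite (lin_add _ _ _ lws) (lin_scale _ _ _ lws).
      rewrite /GRing.scale /=; field; exact: lt0r_neq0.
    + move=> z; apply: (le_trans (ler_normB _ _)).
      rewrite mulrDl mul1r; apply: lerD; last exact: bws.
      rewrite normrM normfV (gtr0_norm t0) mulrC; apply: ler_wpM2l.
        by rewrite invr_ge0 ltW.
      exact: dxs.2.
  split; first by case: dys.
  move=> u' v' Fuv.
  have hK : KG (u' - x, v' - yb).
    exact: (@coneD1 _ _ (gph F : set (X * Y)%type) (x, yb) (u', v') Fuv).
  have := LC ((u' - x, v' - yb), 0) (conj hK (coneD0 Ax)).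
  rewrite /psi /g /= subr0 Lsplit; lra.
Qed.
End Main.

Section Top.
Variable R : realType.
Variables X Y : normedModType R.
Variable F : X -> set Y.
Variable A : set X.
Variable yb : Y.
Variable xb : X.
Hypothesis cF : closed_convex_map F.
Hypothesis cA : convexS A.

Lemma tau_to_eta t : tau_set F A xb yb t -> eta_set F A xb yb t^-1.
Proof.
move=> [t0 [d d0 Hd]]; split; first by rewrite invr_gt0.
exists d => // x Sx Bx e1 e2 e10 e20 e12.
exact: (L1_point cF cA Sx t0 (Hd x Sx Bx) e10 e20 e12).
Qed.

Lemma eta_to_tau e t : eta_set F A xb yb e -> 0 < t -> 1 < t * e -> tau_set F A xb yb t.
Proof.
move=> [e0 [d d0 Hd]] t0 te; split => //.
exists d => // x Sx Bx xs nxs dxs.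
exact: (L2_point cF cA Sx t0 te (Hd x Sx Bx) nxs dxs).
Qed.

Let E := eta_set F A xb yb.
Let T := tau_set F A xb yb.
Let Es := (fun e : R => e%:E) @` E `|` [set 0%E].

Lemma etaA_ge0 : (0 <= etaA F A xb yb)%E.
Proof. by apply: ereal_sup_ubound; right. Qed.

Lemma exists_gt z : 0 <= z -> (z%:E < etaA F A xb yb)%E -> exists2 e, E e & z < e.
Proof.
move=> z0 hz; apply: contrapT => nh.
have : (etaA F A xb yb <= z%:E)%E.
  apply: ge_ereal_sup => _ [[e Ee <-]|->]; last by rewrite lee_fin.
  rewrite lee_fin leNgt; apply/negP => ze; apply: nh; by exists e.
by rewrite leNgt hz.
Qed.

Lemma T_gt0 t : T t -> 0 < t.
Proof. by case. Qed.

Lemma E_gt0 e : E e -> 0 < e.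
Proof. by case. Qed.

Lemma main_eq : inve (etaA F A xb yb) = ereal_inf ((fun t : R => t%:E) @` T).
Proof.
have lb0 : (0 <= ereal_inf ((fun t : R => t%:E) @` T))%E.
  apply: le_ereal_inf_tmp => _ [t Tt <-]; rewrite lee_fin; exact: ltW (T_gt0 Tt).
have [[e0 Ee0]|nE] := pselect (exists e, E e); last first.
  have Te : T = set0.
    apply/seteqP; split => // t Tt; exfalso; apply: nE; exists t^-1.
    exact: tau_to_eta.
  have -> : etaA F A xb yb = 0%E.
    rewrite /etaA.
    have -> : (fun e : R => e%:E) @` eta_set F A xb yb `|` [set 0%E] = [set 0%E].
      apply/seteqP; split => [z [[e Ee _]|//]|z ->]; last by right.
      by exfalso; apply: nE; exists e.
    exact: ereal_sup1.
  by rewrite Te image_set0 ereal_inf0 /inve /= eqxx.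
have e0p := E_gt0 Ee0.
have sge : ((e0)%:E <= etaA F A xb yb)%E by apply: ereal_sup_ubound; left; exists e0.
case Hs : (etaA F A xb yb) => [r| |].
- have r0 : 0 < r by rewrite Hs lee_fin in sge; exact: lt_le_trans e0p sge.
  rewrite /inve gt_eqF //.
  apply/eqP; rewrite eq_le; apply/andP; split.
    apply: le_ereal_inf_tmp => _ [t Tt <-].
    have := tau_to_eta Tt => Et.
    have : ((t^-1)%:E <= etaA F A xb yb)%E by apply: ereal_sup_ubound; left; exists t^-1.
    rewrite Hs !lee_fin => h.
    have t0 := T_gt0 Tt.
    by rewrite -(invrK t) lef_pV2 ?posrE ?invr_gt0.
  apply/lee_addgt0Pr => eps eps0.
  set t := r^-1 + eps.
  have t0 : 0 < t by rewrite addr_gt0 ?invr_gt0.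
  have : ((t^-1)%:E < etaA F A xb yb)%E.
    rewrite Hs lte_fin -(invrK r) ltf_pV2 ?posrE ?invr_gt0 //.
    by rewrite /t ltrDl.
  have ti : 0 <= t^-1 by rewrite invr_ge0 ltW.
  move=> /(exists_gt ti) [e Ee te].
  have Tt : T t.
    apply: (eta_to_tau Ee t0).
    by rewrite -ltr_pdivrMl // mulr1.
  by apply: ereal_inf_lbound; exists t.
- rewrite /inve /=.
  apply/eqP; rewrite eq_le lb0 /=.
  apply/lee_addgt0Pr => eps eps0; rewrite add0e.
  have : ((eps^-1)%:E < etaA F A xb yb)%E by rewrite Hs ltey.
  have ti : 0 <= eps^-1 by rewrite invr_ge0 ltW.
  move=> /(exists_gt ti) [e Ee te].
  have Tt : T eps.
    apply: (eta_to_tau Ee eps0).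
    by rewrite -ltr_pdivrMl // mulr1.
  by apply: ereal_inf_lbound; exists eps.
- by move: etaA_ge0; rewrite Hs.
Qed.

End Top.

Unset Implicit Arguments.

Theorem proposition4p1 (R : realType) (X Y : completeNormedModType R)
  (F : X -> set Y) (A : set X) (yb : Y) (xb : X) :
  closed_convex_map F ->
  closed A -> convexS A ->
  F xb yb -> A xb ->
  inve (etaA F A xb yb) =
  ereal_inf ((fun t : R => t%:E) @` tau_set F A xb yb).
Proof.
move=> cF _ cA _ _.
exact: (@main_eq R X Y F A yb xb cF cA).
Qed.
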